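(* Let $\Sigma\subseteq\mathbb{C}$ be a finite set, let $b_m\in\Sigma^{\mathbb{Z}}$ for all $m\in\mathbb{N}$, and let $b_m\to b$ pointwise (so $b\in\Sigma^{\mathbb{Z}}$). Assume moreover that for every $N\in\mathbb{N}$, $g(N):=\sup_{m\in\mathbb{N}}\operatorname{gap}(N,b_m)<\infty$. Then for every $N\in\mathbb{N}$ there is $m_0$ such that $\mathcal{W}_N(b_m)\subseteq\mathcal{W}_N(b)$ for all $m\ge m_0$.
   Context: For $u\in\Sigma^{\mathbb{Z}}$ and $N\in\mathbb{N}$, $\mathcal{W}_N(u)$ is the set of words $(u(k),\dots,u(k+N-1))\in\Sigma^N$, $k\in\mathbb{Z}$. For $w\in\mathcal{W}_N(u)$: $\operatorname{pos}(w,u):=\{k\in\mathbb{Z}:(u(k),\dots,u(k+N-1))=w\}$, $\operatorname{gap}(w,u):=\min\{r\in\mathbb{N}:\operatorname{pos}(w,u)+\{-r,\dots,r\}=\mathbb{Z}\}$ (with $\min\emptyset=\infty$), and $\operatorname{gap}(N,u):=\max\{\operatorname{gap}(w,u):w\in\mathcal{W}_N(u)\}$. *)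

(* Defs.v *)
From Stdlib Require Import Reals ZArith List Lia.
From Coquelicot Require Import Coquelicot.
Import ListNotations.
Open Scope Z_scope.

Definition word (u : Z -> C) (k : Z) (N : nat) : list C :=
  map (fun i => u (k + Z.of_nat i)) (seq 0 N).

Definition in_words (N : nat) (u : Z -> C) (w : list C) : Prop :=
  exists k : Z, word u k N = w.

Definition in_pos (w : list C) (u : Z -> C) (k : Z) : Prop :=
  word u k (length w) = w.

Definition gap_cover (w : list C) (u : Z -> C) (r : nat) : Prop :=
  forall z : Z, exists k : Z, in_pos w u k /\ Z.abs (z - k) <= Z.of_nat r.

(* gap(w,u) = r  (finite value; gap(w,u) = infinity iff no r satisfies this) *)
Definition is_gap (w : list C) (u : Z -> C) (r : nat) : Prop :=
  gap_cover w u r /\ (forall r', gap_cover w u r' -> (r <= r')%nat).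

Definition gapN_le (N : nat) (u : Z -> C) (G : nat) : Prop :=
  forall w, in_words N u w -> exists r, is_gap w u r /\ (r <= G)%nat.

(* Main.v *)
Require Import Defs.
From Stdlib Require Import Reals ZArith List Lia Classical.
From Coquelicot Require Import Coquelicot.

Lemma sep_lem (c : C) (L : list C) :
  exists eps : posreal, forall s, In s L -> ball c eps s -> s = c.
Proof.
  induction L as [|a L IH].
  - exists (mkposreal 1 Rlt_0_1). intros s [].
  - destruct IH as [e1 H1].
    destruct (classic (a = c)) as [Hac|Hac].
    + exists e1. intros s [<-|Hs] Hb; auto.
    + assert (~ (forall eps : posreal, ball c eps a)) as Hn.
      { intro Hc. apply Hac. symmetry. apply eq_close. exact Hc. }
      apply not_all_ex_not in Hn. destruct Hn as [e2 He2].
      assert (Hp : (0 < Rmin e1 e2)%R).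
      { apply Rmin_pos; apply cond_pos. }
      exists (mkposreal _ Hp). simpl. intros s [<-|Hs] Hb.
      * exfalso. apply He2. eapply ball_le; [apply Rmin_r|exact Hb].
      * apply H1; auto. eapply ball_le; [apply Rmin_l|exact Hb].
Qed.

Open Scope Z_scope.
Lemma word_length (u : Z -> C) k N : length (word u k N) = N.
Proof. unfold word. rewrite length_map, length_seq. reflexivity. Qed.

Theorem proposition4p13
  (Sigma : list C) (b : nat -> Z -> C) (blim : Z -> C)
  (hS : forall (m : nat) (k : Z), In (b m k) Sigma)
  (hconv : forall k : Z,
      filterlim (fun m : nat => b m k) eventually (locally (blim k)))
  (hgap : forall N : nat, exists G : nat, forall m : nat, gapN_le N (b m) G) :
  forall N : nat, exists m0 : nat, forall m : nat, (m0 <= m)%nat ->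
    forall w : list C, in_words N (b m) w -> in_words N blim w.
Proof.
  assert (Hev : forall k, exists M, forall m, (M <= m)%nat -> b m k = blim k).
  { intro k. destruct (sep_lem (blim k) Sigma) as [eps He].
    destruct (hconv k (ball (blim k) eps) (locally_ball _ eps)) as [M HM].
    exists M. intros m Hm. apply He; auto. }
  intro N. destruct (hgap N) as [G HG].
  assert (Hfin : forall n : nat, exists M, forall m, (M <= m)%nat ->
            forall i, (i < n)%nat -> b m (- Z.of_nat G + Z.of_nat i) = blim (- Z.of_nat G + Z.of_nat i)).
  { induction n as [|n IH].
    - exists 0%nat. intros. lia.
    - destruct IH as [M1 H1]. destruct (Hev (- Z.of_nat G + Z.of_nat n)) as [M2 H2].
      exists (Nat.max M1 M2). intros m Hm i Hi.
      destruct (Nat.eq_dec i n) as [->|Hne].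
      + apply H2. lia.
      + apply H1; lia. }
  destruct (Hfin (2 * G + N + 1)%nat) as [M HM].
  exists M. intros m Hm w Hw.
  destruct (HG m w Hw) as [r [[Hcov _] Hr]].
  destruct (Hcov 0) as [k [Hk Hkr]].
  unfold in_pos in Hk.
  destruct Hw as [k0 Hk0]. rewrite <- Hk0, word_length in Hk. rewrite Hk0 in Hk.
  exists k. rewrite <- Hk. unfold word. apply map_ext_in.
  intros i Hi. apply in_seq in Hi.
  assert (E : k + Z.of_nat i = - Z.of_nat G + Z.of_nat (Z.to_nat (k + Z.of_nat i + Z.of_nat G))) by lia.
  rewrite E. symmetry. apply HM; [exact Hm|]. lia.
Qed.
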